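(* There exist finitely presented $2$-structures that are not Lambek coherent.
   Context: A $2$-structure $\mathcal{S}=\langle\mathcal{F},\theta_{\mathcal{F}},\mathcal{T},\theta_{\mathcal{T}}\rangle$ consists of a graded set $\mathcal{F}$ of function symbols, a set $\theta_{\mathcal{F}}$ of equations between terms, a set $\mathcal{T}$ of labelled reduction rules $\tau:[F(x_1,\dots,x_n)]\to[G(x_1,\dots,x_n)]$ between congruence classes of terms (each label for one source/target pair), and a set $\theta_{\mathcal{T}}$ of equations between reductions with the same source and target, where, over a category $\mathscr{C}$, reductions are generated from morphisms $[f]$ of $\mathscr{C}$ by applying function symbols $F(\varphi_1,\dots,\varphi_n)$, rules $\tau(\varphi_1,\dots,\varphi_n):[F(\bar s/\bar x)]\to[G(\bar t/\bar x)]$, and composition $\varphi\cdot\psi$; $\theta_{\mathcal{T}}$ always contains all instances of the identity, associativity, functoriality ($F(\varphi_i)\cdot F(\psi_i)=F(\varphi_i\cdot\psi_i)$) and naturality ($\varphi(\varphi_1,\dots)=s(\varphi_1,\dots)\cdot\varphi(t_1,\dots)=\varphi(s_1,\dots)\cdot t(\varphi_1,\dots)$ for $\varphi:s\to t$) equations. $\mathbb{F}_{\mathscr{C}}(\mathcal{S})$ is the category of classes of terms over $\mathrm{Ob}(\mathscr{C})$ and reductions modulo the congruence generated by $\theta_{\mathcal{T}}$. $\mathcal{S}$ is finitely presented if $\mathcal{F},\theta_{\mathcal{F}},\mathcal{T}$ and the non-mandatory equations in $\theta_{\mathcal{T}}$ are finite. A reduction is in general position if the number of distinct inherited morphisms $[f]$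 in it is maximal among all reductions of the same shape (the shape being the reduction with every inherited morphism replaced by a placeholder). $\mathcal{S}$ is Lambek coherent if, whenever $\mathscr{C}$ is a discrete category, it is decidable whether two reductions in general position with the same source and target are equal in $\mathbb{F}_{\mathscr{C}}(\mathcal{S})$. *)

(* Defs.v *)
From Stdlib Require Import List Arith.
Import ListNotations.
Set Implicit Arguments.

Inductive PR : Type :=
| PZero | PSucc | PProj (i : nat) | PComp (f : PR) (gs : list PR)
| PPrim (f g : PR) | PMu (f : PR).

Inductive eval : PR -> list nat -> nat -> Prop :=
| ev_zero v : eval PZero v 0
| ev_succ x v : eval PSucc (x :: v) (S x)
| ev_proj i v : i < length v -> eval (PProj i) v (nth i v 0)
| ev_comp f gs v ys y : evals gs v ys -> eval f ys y -> eval (PComp f gs) v y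
| ev_prim0 f g v y : eval f v y -> eval (PPrim f g) (0 :: v) y
| ev_primS f g n v r y : eval (PPrim f g) (n :: v) r -> eval g (n :: r :: v) y ->
    eval (PPrim f g) (S n :: v) y
| ev_mu f v n : eval f (n :: v) 0 ->
    (forall m, m < n -> exists k, eval f (m :: v) (S k)) -> eval (PMu f) v n
with evals : list PR -> list nat -> list nat -> Prop :=
| evs_nil v : evals [] v []
| evs_cons g gs v y ys : eval g v y -> evals gs v ys -> evals (g :: gs) v (y :: ys).

Definition cpair (x y : nat) : nat := (x + y) * (x + y + 1) / 2 + y.

Inductive term (A : Type) : Type :=
| tvar (a : A)
| tapp (f : nat) (args : list (term A)).
Arguments tvar {A} a.
Arguments tapp {A} f args.

Fixpoint tsubst {A B : Type} (s : A -> term B) (t : term A) : term B :=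
  match t with
  | tvar a => s a
  | tapp f ts => tapp f (map (tsubst s) ts)
  end.

Fixpoint tvars {A : Type} (t : term A) : list A :=
  match t with
  | tvar a => [a]
  | tapp _ ts => (fix go (l : list (term A)) : list A :=
                    match l with [] => [] | u :: l' => tvars u ++ go l' end) ts
  end.

Definition lsubst {A : Type} (ss : list (term A)) (t : term nat) : term A :=
  tsubst (fun k => nth k ss (tapp 0 [])) t.

(* raw reductions: leaves are inherited morphisms [1_a] of the discrete
   category (or variables, for schematic reductions); F(phis); tau(phis);
   composition phi . psi (diagrammatic order: first phi, then psi). *)
Inductive red (A : Type) : Type :=
| rleaf (a : A)
| rfun (f : nat) (args : list (red A))
| rrule (i : nat) (args : list (red A))
| rcomp (phi psi : red A).
Arguments rleaf {A} a.
Arguments rfun {A} f args.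
Arguments rrule {A} i args.
Arguments rcomp {A} phi psi.

Fixpoint ofterm {A : Type} (t : term A) : red A :=
  match t with
  | tvar a => rleaf a
  | tapp f ts => rfun f (map ofterm ts)
  end.

Fixpoint rsubst {A B : Type} (s : A -> red B) (r : red A) : red B :=
  match r with
  | rleaf a => s a
  | rfun f rs => rfun f (map (rsubst s) rs)
  | rrule i rs => rrule i (map (rsubst s) rs)
  | rcomp p q => rcomp (rsubst s p) (rsubst s q)
  end.

Definition shape {A : Type} (r : red A) : red unit :=
  rsubst (fun _ => rleaf tt) r.

Fixpoint leaves {A : Type} (r : red A) : list A :=
  let fix go (l : list (red A)) : list A :=
      match l with [] => [] | u :: l' => leaves u ++ go l' end in
  match r with
  | rleaf a => [a]
  | rfun _ rs => go rs
  | rrule _ rs => go rs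
  | rcomp p q => leaves p ++ leaves q
  end.

Fixpoint compfree {A : Type} (r : red A) : Prop :=
  let fix go (l : list (red A)) : Prop :=
      match l with [] => True | u :: l' => compfree u /\ go l' end in
  match r with
  | rleaf _ => True
  | rfun _ rs => go rs
  | rrule _ rs => go rs
  | rcomp _ _ => False
  end.

(* - function symbols are 0,...,length ar - 1, symbol f has arity nth f ar;
   - eqF : the (finitely many) equations of theta_F (terms in variables);
   - rules : the i-th entry (n, l, r) is the rule tau_i : [l(x_0..x_{n-1})]
     -> [r(x_0..x_{n-1})];
   - eqT : the finitely many non-mandatory equations of theta_T, between
     schematic reductions (leaves = variables).                          *)
Record FP2S : Type := {
  ar : list nat;
  eqF : list (term nat * term nat);
  rules : list (nat * term nat * term nat);
  eqT : list (red nat * red nat)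
}.

Section Theory.
Variable S : FP2S.

Fixpoint wft {A : Type} (t : term A) : Prop :=
  match t with
  | tvar _ => True
  | tapp f ts => f < length (ar S) /\ length ts = nth f (ar S) 0 /\
      (fix go (l : list (term A)) : Prop :=
         match l with [] => True | u :: l' => wft u /\ go l' end) ts
  end.

Inductive teq {A : Type} : term A -> term A -> Prop :=
| teq_refl t : wft t -> teq t t
| teq_sym t u : teq t u -> teq u t
| teq_trans t u v : teq t u -> teq u v -> teq t v
| teq_ax l r (s : nat -> term A) : In (l, r) (eqF S) -> (forall k, wft (s k)) ->
    teq (tsubst s l) (tsubst s r)
| teq_arg f pre post t u : teq t u -> wft (tapp f (pre ++ t :: post)) ->
    teq (tapp f (pre ++ t :: post)) (tapp f (pre ++ u :: post)).

(* typing of reductions: hastype phi s t  means  phi : [s] -> [t] *)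
Inductive hastype {A : Type} : red A -> term A -> term A -> Prop :=
| ht_leaf a : hastype (rleaf a) (tvar a) (tvar a)
| ht_fun f rs ss ts : f < length (ar S) -> length rs = nth f (ar S) 0 ->
    hastypes rs ss ts -> hastype (rfun f rs) (tapp f ss) (tapp f ts)
| ht_rule i n l r rs ss ts : nth_error (rules S) i = Some (n, l, r) ->
    length rs = n -> hastypes rs ss ts ->
    hastype (rrule i rs) (lsubst ss l) (lsubst ts r)
| ht_comp p q s t u : hastype p s t -> hastype q t u -> hastype (rcomp p q) s u
| ht_conv p s t s' t' : hastype p s t -> teq s s' -> teq t t' -> hastype p s' t'
with hastypes {A : Type} : list (red A) -> list (term A) -> list (term A) -> Prop :=
| hts_nil : hastypes [] [] []
| hts_cons p s t rs ss ts : hastype p s t -> hastypes rs ss ts ->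
    hastypes (p :: rs) (s :: ss) (t :: ts).

Definition typed {A : Type} (p : red A) : Prop := exists s t, hastype p s t.

(* generating equations of theta_T (mandatory ones and instances of eqT) *)
Inductive axiom {A : Type} : red A -> red A -> Prop :=
| ax_idl p s t : hastype p s t -> axiom (rcomp (ofterm s) p) p
| ax_idr p s t : hastype p s t -> axiom (rcomp p (ofterm t)) p
| ax_assoc p q r : axiom (rcomp (rcomp p q) r) (rcomp p (rcomp q r))
| ax_funct f ps qs : length ps = length qs ->
    axiom (rcomp (rfun f ps) (rfun f qs))
          (rfun f (map (fun pq => rcomp (fst pq) (snd pq)) (combine ps qs)))
| ax_nat (p : red nat) (s t : term nat) (P : nat -> red A) (sg tg : nat -> term A) :
    hastype p s t -> (forall k, hastype (P k) (sg k) (tg k)) ->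
    axiom (rcomp (rsubst P (ofterm s)) (rsubst (fun k => ofterm (tg k)) p))
          (rcomp (rsubst (fun k => ofterm (sg k)) p) (rsubst P (ofterm t)))
| ax_nat_mid (p : red nat) (s t : term nat) (P : nat -> red A) (sg tg : nat -> term A) :
    compfree p -> hastype p s t -> (forall k, hastype (P k) (sg k) (tg k)) ->
    axiom (rsubst P p)
          (rcomp (rsubst P (ofterm s)) (rsubst (fun k => ofterm (tg k)) p))
| ax_user l r (sg : nat -> term A) : In (l, r) (eqT S) -> (forall k, wft (sg k)) ->
    axiom (rsubst (fun k => ofterm (sg k)) l) (rsubst (fun k => ofterm (sg k)) r).

(* equality of morphisms in F_C(S): the congruence generated by theta_T *)
Inductive req {A : Type} : red A -> red A -> Prop :=
| req_refl p s t : hastype p s t -> req p p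
| req_sym p q : req p q -> req q p
| req_trans p q r : req p q -> req q r -> req p r
| req_ax p q s t : axiom p q -> hastype p s t -> hastype q s t -> req p q
| req_fun f pre post p q s t : req p q ->
    hastype (rfun f (pre ++ p :: post)) s t -> hastype (rfun f (pre ++ q :: post)) s t ->
    req (rfun f (pre ++ p :: post)) (rfun f (pre ++ q :: post))
| req_rule i pre post p q s t : req p q ->
    hastype (rrule i (pre ++ p :: post)) s t -> hastype (rrule i (pre ++ q :: post)) s t ->
    req (rrule i (pre ++ p :: post)) (rrule i (pre ++ q :: post))
| req_compl p p' q s t : req p p' -> hastype (rcomp p q) s t -> hastype (rcomp p' q) s t ->
    req (rcomp p q) (rcomp p' q)
| req_compr p q q' s t : req q q' -> hastype (rcomp p q) s t -> hastype (rcomp p q') s t ->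
    req (rcomp p q) (rcomp p q').

Definition WF2S : Prop :=
  (forall l r, In (l, r) (eqF S) -> wft l /\ wft r) /\
  (forall n l r, In (n, l, r) (rules S) ->
     wft l /\ wft r /\ (forall k, In k (tvars l) -> k < n)
                    /\ (forall k, In k (tvars r) -> k < n)) /\
  (forall l r, In (l, r) (eqT S) -> exists s t, hastype l s t /\ hastype r s t).

Definition ndist {A : Type} (l : list A) (k : nat) : Prop :=
  exists l', NoDup l' /\ (forall x, In x l' <-> In x l) /\ length l' = k.

Definition genpos {A : Type} (p : red A) : Prop :=
  typed p /\
  forall (q : red A) k k', typed q -> shape q = shape p ->
    ndist (leaves p) k -> ndist (leaves q) k' -> k' <= k.

Section Code.
Context {O : Type} (enc : O -> nat).
Fixpoint code (r : red O) : nat :=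
  let fix codes (l : list (red O)) : nat :=
      match l with [] => 0 | u :: l' => Nat.succ (cpair (code u) (codes l')) end in
  match r with
  | rleaf a => cpair 0 (enc a)
  | rfun f rs => cpair 1 (cpair f (codes rs))
  | rrule i rs => cpair 2 (cpair i (codes rs))
  | rcomp p q => cpair 3 (cpair (code p) (code q))
  end.
End Code.

(* Lambek coherence: for every discrete category C (a countable set O of
   objects, given with an injective coding), equality in F_C(S) of two
   reductions in general position with the same source and target is
   decidable, i.e. computed by a mu-recursive function on codes. *)
Definition LambekCoherent : Prop :=
  forall (O : Type) (enc : O -> nat), (forall a b, enc a = enc b -> a = b) ->
  exists prog : PR,
    forall (p q : red O) (s t : term O),
      genpos p -> genpos q -> hastype p s t -> hastype q s t ->
      (req p q -> eval prog [cpair (code enc p) (code enc q)] 1) /\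
      (~ req p q -> eval prog [cpair (code enc p) (code enc q)] 0).

End Theory.

(* Main.v *)
Require Import Defs.
From Stdlib Require Import List Arith Lia Bool ClassicalEpsilon FunctionalExtensionality Classical.
Import ListNotations.
Set Implicit Arguments.

Fixpoint eval_det p v y (H : eval p v y) {struct H} : forall y', eval p v y' -> y = y'
with evals_det gs v ys (H : evals gs v ys) {struct H} : forall ys', evals gs v ys' -> ys = ys'.
Proof.
  - destruct H; intros y' H'.
    + inversion H'; auto.
    + inversion H'; auto.
    + inversion H'; auto.
    + inversion H'; subst.
      assert (ys = ys0) by (eapply evals_det; eauto). subst.
      eapply eval_det; eauto.
    + inversion H'; subst. eapply eval_det; eauto.
    + inversion H'; subst.
      assert (r = r0) by (eapply eval_det; eauto). subst.
      eapply eval_det; eauto.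
    + inversion H'; subst.
      match goal with Hq : forall m, m < y' -> _ |- _ => rename Hq into Hlt2 end.
      match goal with Hq : eval f (y' :: v) 0 |- _ => rename Hq into H0' end.
      destruct (lt_eq_lt_dec n y') as [[Hlt|Heq]|Hlt]; auto.
      * destruct (Hlt2 n Hlt) as [k Hk].
        pose proof (eval_det _ _ _ H _ Hk). discriminate.
      * destruct (H0 y' Hlt) as [k Hk].
        pose proof (eval_det _ _ _ Hk _ H0'). discriminate.
  - destruct H; intros ys' H'.
    + inversion H'; auto.
    + inversion H'; subst.
      f_equal; [eapply eval_det | eapply evals_det]; eauto.
Qed.

Definition ochoose {X : Type} (P : X -> Prop) : option X :=
  match excluded_middle_informative (exists x, P x) with
  | left H => Some (proj1_sig (constructive_indefinite_description P H))
  | right _ => None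
  end.

Lemma ochoose_some {X} (P : X -> Prop) x : ochoose P = Some x -> P x.
Proof.
  unfold ochoose. destruct excluded_middle_informative as [H|H]; intro E; inversion E.
  exact (proj2_sig _).
Qed.

Lemma ochoose_none {X} (P : X -> Prop) : ochoose P = None -> forall x, ~ P x.
Proof.
  unfold ochoose. destruct excluded_middle_informative as [H|H]; intro E; inversion E.
  intros x Hx. apply H. eauto.
Qed.

Lemma ochoose_P {X} (P : X -> Prop) x : P x -> (forall y, P y -> y = x) -> ochoose P = Some x.
Proof.
  intros Hx Hu. destruct (ochoose P) eqn:E.
  - apply ochoose_some in E. f_equal. auto.
  - exfalso. eapply ochoose_none; eauto.
Qed.

Lemma ochoose_nP {X} (P : X -> Prop) : (forall x, ~ P x) -> ochoose P = None.
Proof.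
  intros H. destruct (ochoose P) eqn:E; auto.
  apply ochoose_some in E. exfalso; eapply H; eauto.
Qed.

Definition arL : list nat :=
  [0;1;0;2;0;0;1;2;2;1;0;2;2;2;2;3;4;2;1;1;1;1;1;0;1;2;1;1].

Notation "'V' k" := (@tvar nat k) (at level 0, k at level 0).
Definition a0 f : term nat := tapp f [].
Definition a1 f x : term nat := tapp f [x].
Definition a2 f x y : term nat := tapp f [x; y].
Definition a3 f x y z : term nat := tapp f [x; y; z].
Definition a4 f x y z w : term nat := tapp f [x; y; z; w].

Definition sZ := 0. Definition sSU := 1. Definition sNIL := 2. Definition sCONS := 3.
Definition sPZ := 4. Definition sPS := 5. Definition sPPJ := 6. Definition sPCM := 7.
Definition sPPR := 8. Definition sPMU := 9. Definition sPNIL := 10. Definition sPCONS := 11.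
Definition sEV := 12. Definition sEVS := 13. Definition sNTH := 14. Definition sMU := 15.
Definition sTST := 16. Definition sSEQN := 17. Definition sCHKN := 18. Definition sCHKL := 19.
Definition sCHKP := 20. Definition sCHKPL := 21. Definition sHLT := 22. Definition sTOP := 23.
Definition sG := 24. Definition sAND := 25. Definition sCOPY := 26. Definition sNILIF := 27.

Definition eqL : list (term nat * term nat) := [
  (a2 12 (a0 4) (V 0), a1 19 (V 0));
  (a2 12 (a0 5) (a2 3 (V 0) (V 1)), a2 17 (a1 19 (V 1)) (a1 1 (V 0)));
  (a2 12 (a1 6 (V 0)) (V 1), a2 14 (V 0) (V 1));
  (a2 14 (a0 0) (a2 3 (V 0) (V 1)), a2 17 (a1 19 (V 1)) (V 0));
  (a2 14 (a1 1 (V 2)) (a2 3 (V 0) (V 1)), a2 17 (a1 18 (V 0)) (a2 14 (V 2) (V 1)));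
  (a2 12 (a2 7 (V 0) (V 1)) (V 2), a2 12 (V 0) (a2 13 (V 1) (V 2)));
  (a2 13 (a0 10) (V 0), a1 27 (a1 19 (V 0)));
  (a2 13 (a2 11 (V 0) (V 1)) (V 2), a2 3 (a2 12 (V 0) (V 2)) (a2 13 (V 1) (V 2)));
  (a2 12 (a2 8 (V 0) (V 1)) (a2 3 (a0 0) (V 2)), a2 17 (a1 20 (V 1)) (a2 12 (V 0) (V 2)));
  (a2 12 (a2 8 (V 0) (V 1)) (a2 3 (a1 1 (V 3)) (V 2)),
     a2 12 (V 1) (a2 3 (V 3) (a2 3 (a2 12 (a2 8 (V 0) (V 1)) (a2 3 (V 3) (V 2))) (V 2))));
  (a2 12 (a1 9 (V 0)) (V 1), a3 15 (V 0) (V 1) (a0 0));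
  (a3 15 (V 0) (V 1) (V 2), a4 16 (a2 12 (V 0) (a2 3 (V 2) (V 1))) (V 0) (V 1) (V 2));
  (a4 16 (a0 0) (V 0) (V 1) (V 2), a1 26 (V 2));
  (a4 16 (a1 1 (V 3)) (V 0) (V 1) (V 2), a2 17 (a1 18 (V 3)) (a3 15 (V 0) (V 1) (a1 1 (V 2))));
  (a2 17 (a0 0) (V 0), a1 26 (V 0));
  (a1 26 (a0 0), a0 0);
  (a1 26 (a1 1 (V 0)), a1 1 (a1 26 (V 0)));
  (a1 18 (a0 0), a0 0);
  (a1 18 (a1 1 (V 0)), a1 18 (V 0));
  (a1 19 (a0 2), a0 0);
  (a1 19 (a2 3 (V 0) (V 1)), a2 25 (a1 18 (V 0)) (a1 19 (V 1)));
  (a2 25 (a0 0) (a0 0), a0 0);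
  (a1 20 (a0 4), a0 0);
  (a1 20 (a0 5), a0 0);
  (a1 20 (a1 6 (V 0)), a1 18 (V 0));
  (a1 20 (a2 7 (V 0) (V 1)), a2 25 (a1 20 (V 0)) (a1 21 (V 1)));
  (a1 20 (a2 8 (V 0) (V 1)), a2 25 (a1 20 (V 0)) (a1 20 (V 1)));
  (a1 20 (a1 9 (V 0)), a1 20 (V 0));
  (a1 21 (a0 10), a0 0);
  (a1 21 (a2 11 (V 0) (V 1)), a2 25 (a1 20 (V 0)) (a1 21 (V 1)));
  (a1 27 (a0 0), a0 2);
  (a1 22 (a0 0), a0 23);
  (a1 22 (a1 1 (V 0)), a1 22 (V 0))
].

Definition Gx : term nat := a1 24 (V 0).
Definition S0 : FP2S := {|
  ar := arL;
  eqF := eqL;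
  rules := [(1, Gx, Gx); (1, Gx, Gx)];
  eqT := [(rrule 0 [rfun 23 []], rrule 1 [rfun 23 []])]
|}.

Inductive Val := vN (n : nat) | vL (l : list nat) | vP (p : PR) | vPL (l : list PR) | vT.
Definition D := option Val.

Definition evS p l : option nat := ochoose (eval p l).
Definition evsS gs l : option (list nat) := ochoose (evals gs l).
Definition muP f l k n := k <= n /\ eval f (n :: l) 0 /\
  (forall j, k <= j -> j < n -> exists k', eval f (j :: l) (S k')).
Definition muS f l k : option nat := ochoose (muP f l k).

Definition dSU (d : D) : D := match d with Some (vN n) => Some (vN (S n)) | _ => None end.
Definition dCOPY (d : D) : D := match d with Some (vN n) => Some (vN n) | _ => None end.
Definition dMU (a b c : D) : D :=
  match a, b, c with Some (vP f), Some (vL l), Some (vN n) => option_map vN (muS f l n)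
  | _, _, _ => None end.

Definition sem (f : nat) (args : list D) : D :=
  match f, args with
  | 0, [] => Some (vN 0)
  | 1, [a] => dSU a
  | 2, [] => Some (vL [])
  | 3, [Some (vN n); Some (vL l)] => Some (vL (n :: l))
  | 4, [] => Some (vP PZero)
  | 5, [] => Some (vP PSucc)
  | 6, [Some (vN i)] => Some (vP (PProj i))
  | 7, [Some (vP f); Some (vPL gs)] => Some (vP (PComp f gs))
  | 8, [Some (vP f); Some (vP g)] => Some (vP (PPrim f g))
  | 9, [Some (vP f)] => Some (vP (PMu f))
  | 10, [] => Some (vPL [])
  | 11, [Some (vP p); Some (vPL l)] => Some (vPL (p :: l))
  | 12, [Some (vP p); Some (vL l)] => option_map vN (evS p l)
  | 13, [Some (vPL gs); Some (vL l)] => option_map vL (evsS gs l)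
  | 14, [Some (vN i); Some (vL l)] => if i <? length l then Some (vN (nth i l 0)) else None
  | 15, [a; b; c] => dMU a b c
  | 16, [Some (vN 0); b; c; d] => dCOPY d
  | 16, [Some (vN (S _)); b; c; d] => dMU b c (dSU d)
  | 17, [Some (vN 0); b] => dCOPY b
  | 18, [Some (vN _)] => Some (vN 0)
  | 19, [Some (vL _)] => Some (vN 0)
  | 20, [Some (vP _)] => Some (vN 0)
  | 21, [Some (vPL _)] => Some (vN 0)
  | 22, [Some (vN _)] => Some vT
  | 23, [] => Some vT
  | 24, [a] => a
  | 25, [Some (vN 0); Some (vN 0)] => Some (vN 0)
  | 26, [a] => dCOPY a
  | 27, [Some (vN 0)] => Some (vL [])
  | _, _ => None
  end.

Fixpoint interp {A : Type} (rho : A -> D) (t : term A) : D :=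
  match t with
  | tvar a => rho a
  | tapp f ts => sem f (map (interp rho) ts)
  end.

Section TI.
Variable A : Type.
Variable P : term A -> Prop.
Hypothesis Hv : forall a, P (tvar a).
Hypothesis Ha : forall f ts, Forall P ts -> P (tapp f ts).
Fixpoint term_ind' (t : term A) : P t :=
  match t with
  | tvar a => Hv a
  | tapp f ts => Ha f ((fix go (l : list (term A)) : Forall P l :=
      match l with [] => Forall_nil _ | u :: l' => Forall_cons _ (term_ind' u) (go l') end) ts)
  end.
End TI.

Lemma interp_tsubst {A B} (rho : B -> D) (s : A -> term B) (t : term A) :
  interp rho (tsubst s t) = interp (fun k => interp rho (s k)) t.
Proof.
  induction t using term_ind'; simpl; auto.
  f_equal. rewrite map_map. apply map_ext_in. intros u Hu.
  rewrite Forall_forall in H. auto.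
Qed.

Lemma inv_comp f gs v y : eval (PComp f gs) v y <-> exists ys, evals gs v ys /\ eval f ys y.
Proof. split. intro H; inversion H; subst; eauto. intros [ys [H1 H2]]; econstructor; eauto. Qed.
Lemma inv_nil v ys : evals [] v ys <-> ys = [].
Proof. split. intro H; inversion H; auto. intros ->; constructor. Qed.
Lemma inv_cons g gs v ys : evals (g :: gs) v ys <->
  exists y ys', ys = y :: ys' /\ eval g v y /\ evals gs v ys'.
Proof. split. intro H; inversion H; subst; eauto 10. intros [y [ys' [-> [H1 H2]]]]; constructor; auto. Qed.
Lemma inv_prim0 f g l y : eval (PPrim f g) (0 :: l) y <-> eval f l y.
Proof. split. intro H; inversion H; subst; auto. intro; constructor; auto. Qed.
Lemma inv_primS f g n l y : eval (PPrim f g) (S n :: l) y <->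
  exists r, eval (PPrim f g) (n :: l) r /\ eval g (n :: r :: l) y.
Proof. split. intro H; inversion H; subst; eauto. intros [r [H1 H2]]; econstructor; eauto. Qed.
Lemma inv_mu f l n : eval (PMu f) l n <-> muP f l 0 n.
Proof.
  unfold muP; split.
  - intro H; inversion H; subst. split; [lia|]. split; auto.
  - intros [_ [H1 H2]]. constructor; auto. intros m Hm. apply H2; auto; lia.
Qed.

Lemma muP_uniq f l k n m : muP f l k n -> muP f l k m -> n = m.
Proof.
  unfold muP. intros [Hk1 [H1 H2]] [Hk2 [H3 H4]].
  destruct (lt_eq_lt_dec n m) as [[Hlt|Heq]|Hlt]; auto.
  - destruct (H4 n Hk1 Hlt) as [k' Hk']. pose proof (eval_det H1 Hk'). discriminate.
  - destruct (H2 m Hk2 Hlt) as [k' Hk']. pose proof (eval_det H3 Hk'). discriminate.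
Qed.

Lemma evS_spec p l y : evS p l = Some y <-> eval p l y.
Proof.
  split. apply ochoose_some. intro H. apply ochoose_P; auto. intros; eapply eval_det; eauto.
Qed.
Lemma evsS_spec gs l ys : evsS gs l = Some ys <-> evals gs l ys.
Proof.
  split. apply ochoose_some. intro H. apply ochoose_P; auto. intros; eapply evals_det; eauto.
Qed.
Lemma muS_spec f l k n : muS f l k = Some n <-> muP f l k n.
Proof.
  split. apply ochoose_some. intro H. apply ochoose_P; auto. intros; eapply muP_uniq; eauto.
Qed.

Lemma opt_ext {X} (a b : option X) : (forall x, a = Some x <-> b = Some x) -> a = b.
Proof.
  intros H. destruct a as [x|], b as [y|]; auto.
  - apply H; auto.
  - symmetry; apply H; auto.
  - apply H; auto.
Qed.

Lemma omap_vN_inj (a b : option nat) : a = b -> option_map vN a = option_map vN b.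
Proof. intros ->; auto. Qed.

Lemma L_zero l : evS PZero l = Some 0.
Proof. apply evS_spec; constructor. Qed.
Lemma L_succ n l : evS PSucc (n :: l) = Some (S n).
Proof. apply evS_spec; constructor. Qed.
Lemma L_proj i l : evS (PProj i) l = if i <? length l then Some (nth i l 0) else None.
Proof.
  apply opt_ext; intro y; rewrite evS_spec. split.
  - intro H; inversion H; subst.
    match goal with Hq : i < length l |- _ => apply Nat.ltb_lt in Hq; rewrite Hq; auto end.
  - destruct (i <? length l) eqn:E; intro H; inversion H; subst.
    apply Nat.ltb_lt in E. constructor; auto.
Qed.
Lemma L_comp f gs l : evS (PComp f gs) l =
  match evsS gs l with Some ys => evS f ys | None => None end.
Proof.
  apply opt_ext; intro y; rewrite evS_spec, inv_comp. split.
  - intros [ys [H1 H2]]. apply evsS_spec in H1. rewrite H1. apply evS_spec; auto.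
  - destruct (evsS gs l) eqn:E; intro H; [|discriminate].
    apply evsS_spec in E; apply evS_spec in H; eauto.
Qed.
Lemma L_nil l : evsS [] l = Some [].
Proof. apply evsS_spec; constructor. Qed.
Lemma L_cons g gs l : evsS (g :: gs) l =
  match evS g l, evsS gs l with Some y, Some ys => Some (y :: ys) | _, _ => None end.
Proof.
  apply opt_ext; intro ys; rewrite evsS_spec, inv_cons. split.
  - intros [y [ys' [-> [H1 H2]]]]. apply evS_spec in H1; apply evsS_spec in H2.
    rewrite H1, H2; auto.
  - destruct (evS g l) eqn:E1; destruct (evsS gs l) eqn:E2; intro H; try discriminate.
    inversion H; subst. apply evS_spec in E1; apply evsS_spec in E2; eauto 10.
Qed.
Lemma L_prim0 f g l : evS (PPrim f g) (0 :: l) = evS f l.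
Proof. apply opt_ext; intro y; rewrite !evS_spec, inv_prim0; tauto. Qed.
Lemma L_primS f g n l : evS (PPrim f g) (S n :: l) =
  match evS (PPrim f g) (n :: l) with Some r => evS g (n :: r :: l) | None => None end.
Proof.
  apply opt_ext; intro y; rewrite evS_spec, inv_primS. split.
  - intros [r [H1 H2]]. apply evS_spec in H1; rewrite H1; apply evS_spec; auto.
  - destruct (evS (PPrim f g) (n :: l)) eqn:E; intro H; [|discriminate].
    apply evS_spec in E; apply evS_spec in H; eauto.
Qed.
Lemma L_mu f l : evS (PMu f) l = muS f l 0.
Proof. apply opt_ext; intro y; rewrite evS_spec, muS_spec, inv_mu; tauto. Qed.
Lemma L_muS f l n : muS f l n =
  match evS f (n :: l) with Some 0 => Some n | Some (S _) => muS f l (S n) | None => None end.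
Proof.
  destruct (evS f (n :: l)) as [[|k]|] eqn:E.
  - apply muS_spec. apply evS_spec in E. unfold muP. split; auto. split; auto.
    intros; lia.
  - apply evS_spec in E. apply opt_ext; intro m; rewrite !muS_spec; unfold muP. split.
    + intros [H1 [H2 H3]]. destruct (Nat.eq_dec n m) as [->|Hne].
      * pose proof (eval_det E H2); discriminate.
      * split; [lia|]. split; auto. intros j Hj Hj'. apply H3; lia.
    + intros [H1 [H2 H3]]. split; [lia|]. split; auto. intros j Hj Hj'.
      destruct (Nat.eq_dec j n) as [->|Hne]; eauto. apply H3; lia.
  - apply ochoose_nP. intros m [H1 [H2 H3]].
    destruct (Nat.eq_dec n m) as [->|Hne].
    + apply evS_spec in H2. congruence.
    + destruct (H3 n) as [k Hk]; try lia. apply evS_spec in Hk; congruence.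
Qed.

Ltac dall rho :=
  repeat match goal with
  | |- context [rho ?k] => destruct (rho k) as [[?n|?l|?p|?l|]|]
  end.
Ltac dnat :=
  repeat match goal with
  | |- context [match ?n with 0 => _ | S _ => _ end] =>
      let m := fresh "m" in destruct n as [|m]
  end.

Lemma dCOPY_dMU a b c : dCOPY (dMU a b c) = dMU a b c.
Proof.
  unfold dMU. destruct a as [[]|]; destruct b as [[]|]; destruct c as [[]|]; simpl; auto.
  destruct (muS _ _ _); auto.
Qed.

Ltac fin := simpl; auto;
  repeat first [rewrite L_cons | rewrite L_comp | rewrite L_prim0 | rewrite L_nil];
  repeat (match goal with |- context [evS ?a ?b] => destruct (evS a b)
    | |- context [evsS ?a ?b] => destruct (evsS a b) end; simpl; auto).

Lemma valid_eqs : forall l r, In (l, r) eqL -> forall rho : nat -> D, interp rho l = interp rho r.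
Proof.
  intros l r H rho. simpl in H.
  repeat destruct H as [H|H]; try contradiction; inversion H; subst; clear H; simpl.
  - dall rho; simpl; auto. rewrite L_zero; auto.
  - dall rho; simpl; auto. rewrite L_succ; auto.
  - dall rho; simpl; auto. rewrite L_proj. destruct (_ <? _); auto.
  - dall rho; simpl; dnat; auto.
  - dall rho; simpl; dnat; auto. destruct (_ <? _); auto.
  - destruct (rho 0) as [[]|]; destruct (rho 1) as [[]|]; destruct (rho 2) as [[]|];
      simpl; auto. rewrite L_comp. destruct (evsS _ _); auto.
  - dall rho; simpl; auto. rewrite L_nil; auto.
  - destruct (rho 0) as [[]|]; destruct (rho 1) as [[]|]; destruct (rho 2) as [[]|]; fin.
  - destruct (rho 0) as [[]|]; destruct (rho 1) as [[]|]; destruct (rho 2) as [[]|]; fin.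
  - destruct (rho 0) as [[]|]; destruct (rho 1) as [[]|]; try (simpl; auto; fail);
    destruct (rho 3) as [[]|]; destruct (rho 2) as [[]|]; simpl; auto.
    rewrite L_primS. destruct (evS (PPrim _ _) _); simpl; auto.
  - destruct (rho 0) as [[]|]; destruct (rho 1) as [[]|]; simpl; auto. rewrite L_mu; auto.
  - destruct (rho 0) as [[]|]; destruct (rho 1) as [[]|]; destruct (rho 2) as [[]|];
      simpl; auto.
    rewrite L_muS. destruct (evS _ _) as [[|k]|]; simpl; auto.
  - dall rho; simpl; auto.
  - destruct (rho 3) as [[]|]; simpl; auto. symmetry; apply dCOPY_dMU.
  - dall rho; simpl; auto.
  - auto.
  - dall rho; simpl; auto.
  - auto.
  - dall rho; simpl; auto.
  - auto.
  - dall rho; simpl; dnat; auto.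
  - auto.
  - auto.
  - auto.
  - dall rho; simpl; auto.
  - dall rho; simpl; auto.
  - dall rho; simpl; auto.
  - dall rho; simpl; auto.
  - auto.
  - dall rho; simpl; auto.
  - auto.
  - auto.
  - dall rho; simpl; auto.
Qed.

Lemma teq_sound {A} (t u : term A) : teq S0 t u -> forall rho, interp rho t = interp rho u.
Proof.
  induction 1 as [t Hw|t u H IH|t u v H1 IH1 H2 IH2|l r s Hin Hs|f pre post t u H IH Hw];
    intros rho; simpl.
  - auto.
  - rewrite IH; auto.
  - rewrite IH1; auto.
  - rewrite !interp_tsubst. apply valid_eqs; auto.
  - rewrite !map_app. simpl. rewrite IH. auto.
Qed.

Definition varinfo {A} (t : term A) : option A :=
  match t with tvar a => Some a | tapp _ _ => None end.

Lemma teq_var {A} (t u : term A) : teq S0 t u -> varinfo t = varinfo u.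
Proof.
  induction 1; simpl; auto; try congruence.
  destruct l; simpl in *.
  - (* variable lhs: impossible, all lhs are applications *)
    simpl in H. repeat destruct H as [H|H]; try contradiction; discriminate.
  - destruct r; simpl; auto.
    simpl in H. repeat destruct H as [H|H]; try contradiction; discriminate.
Qed.

Fixpoint src {A} (r : red A) : term A :=
  match r with
  | rleaf a => tvar a
  | rfun f rs => tapp f (map src rs)
  | rrule i rs => tapp 24 (map src rs)
  | rcomp p q => src p
  end.

Definition comp (d : D) : bool := match d with Some vT => false | _ => true end.

Fixpoint w {A} (rho : A -> D) (r : red A) : bool :=
  match r with
  | rleaf _ => false
  | rfun _ _ => false
  | rrule i rs => if Nat.eqb i 1 then
        match map (fun r => interp rho (src r)) rs with [d] => comp d | _ => false end
      else false
  | rcomp p q => xorb (w rho p) (w rho q)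
  end.

Fixpoint actsum {A} (r : red A) (f : A -> bool) : bool :=
  match r with
  | rleaf a => f a
  | rcomp p q => xorb (actsum p f) (actsum q f)
  | _ => false
  end.

Section RI.
Variable A : Type.
Variable P : red A -> Prop.
Hypothesis Hl : forall a, P (rleaf a).
Hypothesis Hf : forall f rs, Forall P rs -> P (rfun f rs).
Hypothesis Hr : forall i rs, Forall P rs -> P (rrule i rs).
Hypothesis Hc : forall p q, P p -> P q -> P (rcomp p q).
Fixpoint red_ind' (r : red A) : P r :=
  match r with
  | rleaf a => Hl a
  | rfun f rs => Hf f ((fix go (l : list (red A)) : Forall P l :=
      match l with [] => Forall_nil _ | u :: l' => Forall_cons _ (red_ind' u) (go l') end) rs)
  | rrule i rs => Hr i ((fix go (l : list (red A)) : Forall P l :=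
      match l with [] => Forall_nil _ | u :: l' => Forall_cons _ (red_ind' u) (go l') end) rs)
  | rcomp p q => Hc (red_ind' p) (red_ind' q)
  end.
End RI.

Lemma src_rsubst {A B} (s : A -> red B) (r : red A) :
  src (rsubst s r) = tsubst (fun k => src (s k)) (src r).
Proof.
  induction r using red_ind'; simpl; auto; f_equal; rewrite !map_map;
    apply map_ext_in; intros; rewrite Forall_forall in H; auto.
Qed.

Lemma w_rsubst {A B} (rho : B -> D) (s : A -> red B) (p : red A) :
  w rho (rsubst s p) = xorb (actsum p (fun k => w rho (s k))) (w (fun k => interp rho (src (s k))) p).
Proof.
  induction p as [a|f rs|i args|p1 IHp1 p2 IHp2]; simpl.
  - destruct (w rho (s a)); auto.
  - auto.
  - destruct (Nat.eqb i 1); auto. rewrite map_map.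
    replace (map (fun x => interp rho (src (rsubst s x))) args)
      with (map (fun r => interp (fun k => interp rho (src (s k))) (src r)) args); auto.
    apply map_ext; intro; rewrite src_rsubst, interp_tsubst; auto.
  - rewrite IHp1, IHp2. destruct (actsum p1 _), (actsum p2 _), (w _ p1), (w _ p2); auto.
Qed.

Lemma w_ofterm {A} rho (t : term A) : w rho (ofterm t) = false.
Proof. destruct t; auto. Qed.

Lemma actsum_false {A} (p : red A) : actsum p (fun _ => false) = false.
Proof. induction p; simpl; auto. rewrite IHp1, IHp2; auto. Qed.

Lemma src_ofterm {A} (t : term A) : src (ofterm t) = t.
Proof.
  induction t using term_ind'; simpl; auto. f_equal. rewrite map_map.
  rewrite <- (map_id ts) at 2. apply map_ext_in; intros; rewrite Forall_forall in H; auto.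
Qed.

Lemma w_subst_ofterm {A} rho (P : nat -> red A) (s : term nat) :
  w rho (rsubst P (ofterm s)) = match varinfo s with Some k => w rho (P k) | None => false end.
Proof. destruct s; auto. Qed.

Scheme ht_mind := Induction for hastype Sort Prop
  with hts_mind := Induction for hastypes Sort Prop.

Lemma T1 {A} (p : red A) s t : hastype S0 p s t ->
  forall rho, interp rho (src p) = interp rho s /\ interp rho (src p) = interp rho t.
Proof.
  intros H rho.
  apply (@ht_mind S0 A (fun p s t _ => interp rho (src p) = interp rho s /\ interp rho (src p) = interp rho t)
    (fun rs ss ts _ => map (fun r => interp rho (src r)) rs = map (interp rho) ss /\
                       map (fun r => interp rho (src r)) rs = map (interp rho) ts)); auto.
  - intros f rs ss ts; intros; match goal with H : _ /\ _ |- _ => destruct H as [IH1 IH2] end. simpl. replace (map (interp rho) (map src rs)) with (map (fun r => interp rho (src r)) rs) by (rewrite map_map; auto). split; f_equal; [exact IH1 | exact IH2].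
  - intros i n l r rs ss ts E Hlen Hts [IH1 IH2]. simpl in E.
    assert (l = Gx /\ r = Gx /\ n = 1) as [-> [-> ->]].
    { destruct i as [|[|i]]; simpl in E; inversion E; auto. destruct i; discriminate. }
    destruct rs as [|r1 [|]]; simpl in Hlen; try discriminate.
    destruct ss as [|s1 ss]; simpl in IH1; try discriminate.
    destruct ts as [|t1 ts]; simpl in IH2; try discriminate.
    inversion IH1; inversion IH2; subst.
    destruct ss; simpl in *; try discriminate. destruct ts; simpl in *; try discriminate.
    simpl. split; assumption.
  - intros p0 q s0 t0 u _ [IH1 IH2] _ [IH3 IH4]. simpl. split; congruence.
  - intros p0 s0 t0 s' t' _ [IH1 IH2] E1 E2.
    rewrite <- (teq_sound E1 rho), <- (teq_sound E2 rho). auto.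
  - intros p0 s0 t0 rs ss ts _ [IH1 IH2] _ [IH3 IH4]. simpl. split; f_equal; assumption.
Qed.

Lemma T2 {A} (p : red A) s t : hastype S0 p s t ->
  varinfo s = varinfo (src p) /\ varinfo t = varinfo (src p).
Proof.
  induction 1; simpl; auto.
  - simpl in H. destruct i as [|[|i]]; simpl in H; inversion H; subst; auto.
    destruct i; discriminate.
  - destruct IHhastype1, IHhastype2. split; congruence.
  - destruct IHhastype. apply teq_var in H0. apply teq_var in H1. split; congruence.
Qed.

Lemma actsum_compfree {A} (p : red A) f : compfree p ->
  actsum p f = match varinfo (src p) with Some k => f k | None => false end.
Proof. destruct p; simpl; auto. contradiction. Qed.

Lemma w_sub_of {A} rho (g : nat -> term A) (p : red nat) :
  w rho (rsubst (fun k => ofterm (g k)) p) = w (fun k => interp rho (g k)) p.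
Proof.
  rewrite w_rsubst.
  replace (fun k => w rho (ofterm (g k))) with (fun _ : nat => false)
    by (extensionality k; symmetry; apply w_ofterm).
  rewrite actsum_false.
  replace (fun k => interp rho (src (ofterm (g k)))) with (fun k => interp rho (g k)); auto.
  extensionality k; rewrite src_ofterm; auto.
Qed.

Lemma axiom_w {A} (p q : red A) s t : axiom S0 p q -> hastype S0 p s t -> hastype S0 q s t ->
  forall rho, w rho p = w rho q.
Proof.
  intros Hax _ _ rho. destruct Hax; simpl.
  - rewrite w_ofterm; auto.
  - rewrite w_ofterm; destruct (w rho p); auto.
  - destruct (w rho p), (w rho q), (w rho r); auto.
  - auto.
  - rewrite !w_subst_ofterm, !w_sub_of.
    destruct (T2 H) as [E1 E2]. rewrite E1, E2.
    replace (fun k => interp rho (tg k)) with (fun k => interp rho (sg k)).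
    + destruct (match varinfo (src p) with Some k => w rho (P k) | None => false end),
        (w (fun k => interp rho (sg k)) p); auto.
    + extensionality k. destruct (T1 (H0 k) rho). congruence.
  - rewrite w_rsubst, w_subst_ofterm, w_sub_of, (actsum_compfree p _ H).
    destruct (T2 H0) as [E1 E2]. rewrite E1.
    replace (fun k => interp rho (src (P k))) with (fun k => interp rho (tg k)); auto.
    extensionality k. destruct (T1 (H1 k) rho). congruence.
  - simpl in H. destruct H as [H|[]]. inversion H; subst. simpl. auto.
Qed.

Lemma req_inv {A} (p q : red A) : req S0 p q ->
  forall rho, w rho p = w rho q /\ interp rho (src p) = interp rho (src q).
Proof.
  induction 1 as [p s t H|p q H IH|p q r H1 IH1 H2 IH2|p q s t Hax Hp Hq
    |f pre post p q s t H IH Hp Hq|i pre post p q s t H IH Hp Hq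
    |p p' q s t H IH Hp Hq|p q q' s t H IH Hp Hq]; intros rho.
  - auto.
  - destruct (IH rho); split; congruence.
  - destruct (IH1 rho), (IH2 rho); split; congruence.
  - split. eapply axiom_w; eauto.
    destruct (T1 Hp rho), (T1 Hq rho). congruence.
  - destruct (IH rho) as [E1 E2]. split; [reflexivity|]. simpl.
    rewrite !map_app. simpl. f_equal. f_equal. f_equal. exact E2.
  - destruct (IH rho) as [E1 E2]. simpl. rewrite !map_app. simpl.
    assert (E3 : interp rho (src p) = interp rho (src q)) by exact E2.
    split.
    + destruct (Nat.eqb i 1); auto.
      replace (map (fun r => interp rho (src r)) pre ++ interp rho (src p) :: map (fun r => interp rho (src r)) post)
        with (map (fun r => interp rho (src r)) pre ++ interp rho (src q) :: map (fun r => interp rho (src r)) post)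
        by (rewrite E3; auto). auto.
    + rewrite !map_map. rewrite E3. reflexivity.
  - destruct (IH rho) as [E1 E2]. simpl. split; [|exact E2].
    f_equal; exact E1.
  - destruct (IH rho) as [E1 E2]. simpl. split; [|reflexivity].
    f_equal; exact E1.
Qed.

Lemma wft_app_iff {A} f (ts : list (term A)) :
  wft S0 (tapp f ts) <-> f < length arL /\ length ts = nth f arL 0 /\ Forall (wft S0) ts.
Proof.
  simpl. split; intros [H1 [H2 H3]]; repeat split; auto.
  - clear H1 H2. induction ts; constructor; destruct H3; auto.
  - clear H1 H2. induction H3; simpl; auto.
Qed.

Lemma wft_tsubst {A B} (s : A -> term B) (t : term A) :
  wft S0 t -> (forall k, wft S0 (s k)) -> wft S0 (tsubst s t).
Proof.
  induction t using term_ind'; simpl tsubst; intros Hw Hs; auto.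
  apply wft_app_iff in Hw as [H1 [H2 H3]]. apply wft_app_iff.
  rewrite length_map. repeat split; auto.
  rewrite Forall_forall in *. intros x Hx. apply in_map_iff in Hx as [y [<- Hy]]. auto.
Qed.

Lemma eqL_wft : forall l r, In (l, r) eqL -> wft S0 l /\ wft S0 r.
Proof.
  intros l r H. simpl in H.
  repeat destruct H as [H|H]; try contradiction; inversion H; subst; clear H;
    split; simpl; repeat split; lia.
Qed.

Lemma teq_wft {A} (t u : term A) : teq S0 t u -> wft S0 t /\ wft S0 u.
Proof.
  induction 1 as [t Hw|t u H IH|t u v H1 IH1 H2 IH2|l r s Hin Hs|f pre post t u H IH Hw].
  - auto.
  - tauto.
  - tauto.
  - destruct (eqL_wft Hin). split; apply wft_tsubst; auto.
  - split; auto. apply wft_app_iff in Hw as [W1 [W2 W3]]. apply wft_app_iff.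
    rewrite length_app in *. simpl in *. repeat split; auto.
    apply Forall_app in W3 as [W3 W4]. inversion W4; subst.
    apply Forall_app; split; auto. constructor; tauto.
Qed.

Lemma teq_refl' {A} (t : term A) : wft S0 t -> teq S0 t t.
Proof. apply teq_refl. Qed.

Lemma teq_cong {A} f (ts us : list (term A)) : f < length arL -> length ts = nth f arL 0 ->
  Forall2 (teq S0) ts us -> teq S0 (tapp f ts) (tapp f us).
Proof.
  intros Hf Hl H.
  assert (G : forall pre, wft S0 (tapp f (pre ++ ts)) -> teq S0 (tapp f (pre ++ ts)) (tapp f (pre ++ us))).
  { clear Hf Hl. induction H as [|t u ts us Htu Hr IH]; intros pre Hw.
    - rewrite app_nil_r in *. apply teq_refl; auto.
    - eapply teq_trans. apply (teq_arg pre ts Htu Hw).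
      replace (pre ++ u :: ts) with ((pre ++ [u]) ++ ts) by (rewrite <- app_assoc; auto).
      replace (pre ++ u :: us) with ((pre ++ [u]) ++ us) by (rewrite <- app_assoc; auto).
      apply IH. rewrite <- app_assoc. simpl.
      apply (teq_wft (teq_arg pre ts Htu Hw)). }
  apply (G []). simpl. apply wft_app_iff. repeat split; auto.
  clear -H. induction H; constructor; auto. apply (teq_wft H).
Qed.

Lemma teq_inst {A} (k : nat) l r (ts : list (term A)) : nth_error eqL k = Some (l, r) ->
  Forall (wft S0) ts ->
  teq S0 (tsubst (fun j => nth j ts (tapp 0 [])) l) (tsubst (fun j => nth j ts (tapp 0 [])) r).
Proof.
  intros E Hw. apply teq_ax.
  - simpl. apply nth_error_In in E. exact E.
  - intros j. destruct (nth_in_or_default j ts (tapp 0 [])) as [Hi | E'].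
    + rewrite Forall_forall in Hw; auto.
    + rewrite E'. apply wft_app_iff. simpl. repeat split; auto; lia.
Qed.

Section PRI.
Variable P : PR -> Prop.
Hypotheses (H0 : P PZero) (H1 : P PSucc) (H2 : forall i, P (PProj i))
  (H3 : forall f gs, P f -> Forall P gs -> P (PComp f gs))
  (H4 : forall f g, P f -> P g -> P (PPrim f g)) (H5 : forall f, P f -> P (PMu f)).
Fixpoint PR_ind' (p : PR) : P p :=
  match p with
  | PZero => H0 | PSucc => H1 | PProj i => H2 i
  | PComp f gs => H3 (PR_ind' f) ((fix go (l : list PR) : Forall P l :=
      match l with [] => Forall_nil _ | u :: l' => Forall_cons _ (PR_ind' u) (go l') end) gs)
  | PPrim f g => H4 (PR_ind' f) (PR_ind' g)
  | PMu f => H5 (PR_ind' f)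
  end.
End PRI.

Section Q.
Context {A : Type}.
Fixpoint num (n : nat) : term A := match n with 0 => tapp 0 [] | S n => tapp 1 [num n] end.
Fixpoint nlist (l : list nat) : term A :=
  match l with [] => tapp 2 [] | x :: l => tapp 3 [num x; nlist l] end.
Fixpoint quote (p : PR) : term A :=
  match p with
  | PZero => tapp 4 [] | PSucc => tapp 5 [] | PProj i => tapp 6 [num i]
  | PComp f gs => tapp 7 [quote f; (fix ql (l : list PR) : term A :=
       match l with [] => tapp 10 [] | g :: l => tapp 11 [quote g; ql l] end) gs]
  | PPrim f g => tapp 8 [quote f; quote g]
  | PMu f => tapp 9 [quote f]
  end.
Definition quote_l := fix ql (l : list PR) : term A :=
       match l with [] => tapp 10 [] | g :: l => tapp 11 [quote g; ql l] end.
Lemma quote_comp f gs : quote (PComp f gs) = tapp 7 [quote f; quote_l gs].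
Proof. reflexivity. Qed.
Definition Zt : term A := tapp 0 [].

Ltac wf := repeat (match goal with
  | |- Forall _ _ => constructor
  | |- wft S0 (tapp _ _) => apply wft_app_iff; split; [simpl; lia | split; [reflexivity | ]]
  end).

Lemma wft_num n : wft S0 (num n).
Proof. induction n; simpl num; wf; auto. Qed.
Lemma wft_nlist l : wft S0 (nlist l).
Proof. induction l; simpl nlist; wf; auto using wft_num. Qed.
Lemma wft_quote p : wft S0 (quote p).
Proof.
  induction p using PR_ind'; simpl quote; wf; auto using wft_num.
  induction H; simpl; repeat split; auto; lia.
Qed.
Lemma wft_quote_l l : wft S0 (quote_l l).
Proof. induction l; simpl; repeat split; auto using wft_quote; lia. Qed.

Lemma interp_num rho n : interp rho (num n) = Some (vN n).
Proof. induction n; simpl; auto. rewrite IHn; auto. Qed.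
Lemma interp_nlist rho l : interp rho (nlist l) = Some (vL l).
Proof. induction l; simpl; auto. rewrite interp_num, IHl; auto. Qed.
Lemma interp_quote rho p : interp rho (quote p) = Some (vP p).
Proof.
  induction p using PR_ind'; simpl; try rewrite interp_num; auto.
  - rewrite IHp. replace (interp rho ((fix ql (l : list PR) : term A :=
       match l with [] => tapp 10 [] | g :: l => tapp 11 [quote g; ql l] end) gs)) with (Some (vPL gs)); auto.
    induction H; simpl; auto. rewrite H, <- IHForall. auto.
  - rewrite IHp1, IHp2; auto.
  - rewrite IHp; auto.
Qed.

Lemma wZt : wft S0 Zt. Proof. unfold Zt; wf. Qed.
End Q.

Global Hint Resolve wft_num wft_nlist wft_quote wft_quote_l wZt : wfdb.
Ltac wf := repeat (match goal with
  | |- Forall _ _ => constructor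
  | |- wft S0 (tapp _ _) => apply wft_app_iff; split; [simpl; lia | split; [reflexivity | ]]
  | |- wft S0 _ => solve [auto with wfdb]
  end).
Ltac inst k ts := refine (teq_inst (ts:=ts) k eq_refl _); wf.
Ltac st k ts := eapply teq_trans; [inst k ts | simpl].

Section Pos.
Context {A : Type}.

Lemma cong1 f (a a' : term A) : f < length arL -> nth f arL 0 = 1 -> teq S0 a a' ->
  teq S0 (tapp f [a]) (tapp f [a']).
Proof. intros. apply teq_cong; auto. Qed.
Lemma cong2 f (a a' b b' : term A) : f < length arL -> nth f arL 0 = 2 -> teq S0 a a' -> teq S0 b b' ->
  teq S0 (tapp f [a; b]) (tapp f [a'; b']).
Proof. intros. apply teq_cong; auto. Qed.
Lemma cong4 f (a a' b c d : term A) : f < length arL -> nth f arL 0 = 4 -> teq S0 a a' ->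
  wft S0 b -> wft S0 c -> wft S0 d ->
  teq S0 (tapp f [a; b; c; d]) (tapp f [a'; b; c; d]).
Proof. intros. apply teq_cong; auto. apply Forall2_cons; auto. repeat apply Forall2_cons; try apply Forall2_nil; apply teq_refl; auto. Qed.

Ltac c1 := apply cong1; [simpl; lia | reflexivity | ].
Ltac c2 := apply cong2; [simpl; lia | reflexivity | | ].
Ltac rf := apply teq_refl; wf.

Lemma copy_num n : teq S0 (tapp 26 [num n]) (num (A:=A) n).
Proof.
  induction n.
  - inst 15 (@nil (term A)).
  - simpl num. st 16 [num (A:=A) n]. c1. exact IHn.
Qed.

Lemma chkn_num n : teq S0 (tapp 18 [num n]) (tapp 0 [] : term A).
Proof.
  induction n.
  - inst 17 (@nil (term A)).
  - simpl num. st 18 [num (A:=A) n]. exact IHn.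
Qed.

Lemma chkl_nlist l : teq S0 (tapp 19 [nlist l]) (tapp 0 [] : term A).
Proof.
  induction l.
  - inst 19 (@nil (term A)).
  - simpl nlist. st 20 [num (A:=A) a; nlist l].
    eapply teq_trans. c2. apply chkn_num. exact IHl. inst 21 (@nil (term A)).
Qed.

Lemma seqn_num (c : term A) n : teq S0 c (tapp 0 []) -> teq S0 (tapp 17 [c; num n]) (num n).
Proof.
  intros H. eapply teq_trans. c2. exact H. rf.
  st 14 [num (A:=A) n]. apply copy_num.
Qed.

Lemma chkpl_gen (gs : list PR) : Forall (fun p => teq S0 (tapp 20 [quote p]) (tapp 0 [] : term A)) gs ->
  teq S0 (tapp 21 [quote_l gs]) (tapp 0 [] : term A).
Proof.
  induction 1; simpl quote_l.
  - inst 28 (@nil (term A)).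
  - st 29 [quote (A:=A) x; quote_l l].
    eapply teq_trans. c2. exact H. exact IHForall. inst 21 (@nil (term A)).
Qed.

Lemma chkp_quote p : teq S0 (tapp 20 [quote p]) (tapp 0 [] : term A).
Proof.
  induction p using PR_ind'; simpl quote.
  + inst 22 (@nil (term A)).
  + inst 23 (@nil (term A)).
  + st 24 [num (A:=A) i]. apply chkn_num.
  + change (teq S0 (tapp 20 [tapp 7 [quote p; quote_l gs]]) (tapp 0 [] : term A)).
    st 25 [quote (A:=A) p; quote_l gs].
    eapply teq_trans. c2. exact IHp. apply chkpl_gen; auto. inst 21 (@nil (term A)).
  + st 26 [quote (A:=A) p1; quote p2].
    eapply teq_trans. c2. exact IHp1. exact IHp2. inst 21 (@nil (term A)).
  + st 27 [quote (A:=A) p]. exact IHp.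
Qed.

Lemma seqn_gen (c y : term A) n : teq S0 c (tapp 0 []) -> teq S0 y (num n) ->
  teq S0 (tapp 17 [c; y]) (num n).
Proof.
  intros H H'. eapply teq_trans. c2. exact H. exact H'. apply seqn_num. rf.
Qed.

Lemma hlt_num n : teq S0 (tapp 22 [num n]) (tapp 23 [] : term A).
Proof.
  induction n.
  - inst 31 (@nil (term A)).
  - simpl num. st 32 [num (A:=A) n]. exact IHn.
Qed.

Lemma nth_num i l : i < length l -> teq S0 (tapp 14 [num i; nlist l]) (num (A:=A) (nth i l 0)).
Proof.
  revert i; induction l as [|x l IH]; intros i Hi; simpl in Hi; [lia|].
  destruct i as [|i]; simpl num; simpl nlist.
  - st 3 [num (A:=A) x; nlist l]. apply seqn_num. apply chkl_nlist.
  - st 4 [num (A:=A) x; nlist l; num i]. simpl nth. apply seqn_gen. apply chkn_num.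
    apply IH; lia.
Qed.

Lemma mu_lemma f v n : teq S0 (tapp 12 [quote f; nlist (n :: v)]) (num (A:=A) 0) ->
  forall k, k <= n ->
  (forall j, k <= j -> j < n -> exists m, teq S0 (tapp 12 [quote f; nlist (j :: v)]) (num (A:=A) (S m))) ->
  teq S0 (tapp 15 [quote f; nlist v; num k]) (num (A:=A) n).
Proof.
  intros H0 k. remember (n - k) as d. revert k Heqd. induction d; intros k Hd Hk Hj.
  - assert (k = n) by lia. subst k.
    st 11 [quote (A:=A) f; nlist v; num n].
    eapply teq_trans. apply cong4; [simpl; lia | reflexivity | exact H0 | wf | wf | wf].
    st 12 [quote (A:=A) f; nlist v; num n]. apply copy_num.
  - destruct (Hj k) as [m Hm]; try lia.
    st 11 [quote (A:=A) f; nlist v; num k].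
    eapply teq_trans. apply cong4; [simpl; lia | reflexivity | exact Hm | wf | wf | wf].
    simpl num. st 13 [quote (A:=A) f; nlist v; num k; num m].
    apply seqn_gen. apply chkn_num.
    change (tapp 1 [num k]) with (num (A:=A) (S k)).
    apply IHd; try lia. intros j Hj1 Hj2. apply Hj; lia.
Qed.

Lemma pos_main : forall p v y, eval p v y -> teq S0 (tapp 12 [quote p; nlist v]) (num (A:=A) y)
with pos_mains : forall gs v ys, evals gs v ys -> teq S0 (tapp 13 [quote_l gs; nlist v]) (nlist (A:=A) ys).
Proof.
  - intros p v y H. destruct H.
    + st 0 [nlist (A:=A) v]. apply chkl_nlist.
    + simpl nlist. st 1 [num (A:=A) x; nlist v]. change (tapp 1 [num x]) with (num (A:=A) (S x)).
      apply seqn_num. apply chkl_nlist.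
    + simpl quote. st 2 [num (A:=A) i; nlist v]. apply nth_num; auto.
    + rewrite quote_comp. st 5 [quote (A:=A) f; quote_l gs; nlist v].
      eapply teq_trans. c2. rf. apply (pos_mains _ _ _ H). apply (pos_main _ _ _ H0).
    + simpl quote; simpl nlist. st 8 [quote (A:=A) f; quote g; nlist v].
      apply seqn_gen. apply chkp_quote. apply (pos_main _ _ _ H).
    + simpl quote; simpl nlist. st 9 [quote (A:=A) f; quote g; nlist v; num n].
      eapply teq_trans. c2. rf. c2. rf. c2. apply (pos_main _ _ _ H). rf.
      change (teq S0 (tapp 12 [quote g; nlist (n :: r :: v)]) (num (A:=A) y)).
      apply (pos_main _ _ _ H0).
    + simpl quote. st 10 [quote (A:=A) f; nlist v].
      change (tapp 0 [] : term A) with (num (A:=A) 0). apply mu_lemma; [apply (pos_main _ _ _ H) | lia |].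
      intros j _ Hj. destruct (H0 j Hj) as [m Hm]. exists m. apply (pos_main _ _ _ Hm).
  - intros gs v ys H. destruct H.
    + simpl quote_l. st 6 [nlist (A:=A) v].
      eapply teq_trans. c1. apply chkl_nlist. inst 30 (@nil (term A)).
    + simpl quote_l; simpl nlist. st 7 [quote (A:=A) g; quote_l gs; nlist v].
      c2. apply (pos_main _ _ _ H). apply (pos_mains _ _ _ H0).
Qed.
End Pos.

Fixpoint pconst k := match k with 0 => PZero | S k => PComp PSucc [pconst k] end.
Lemma eval_pconst v k : eval (pconst k) v k.
Proof.
  induction k; simpl. constructor.
  econstructor. constructor. exact IHk. constructor. constructor.
Qed.
Definition pSu a := PComp PSucc [a].
Lemma eval_pSu a v y : eval a v y -> eval (pSu a) v (S y).
Proof. intros. econstructor. constructor. eauto. constructor. constructor. Qed.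

Definition padd := PPrim (PProj 0) (PComp PSucc [PProj 1]).
Lemma eval_padd a b : eval padd [a; b] (a + b).
Proof.
  induction a; simpl.
  - constructor. apply (@ev_proj 0 [b]). simpl; lia.
  - eapply ev_primS. exact IHa. econstructor. constructor.
    apply (@ev_proj 1 [a; a + b; b]). simpl; lia. constructor. constructor.
Qed.
Fixpoint tri n := match n with 0 => 0 | S n => tri n + S n end.
Definition ptri := PPrim PZero (PComp padd [PProj 1; PComp PSucc [PProj 0]]).
Lemma eval_ptri s : eval ptri [s] (tri s).
Proof.
  induction s; simpl.
  - constructor. constructor.
  - eapply ev_primS. exact IHs. econstructor.
    + constructor. apply (@ev_proj 1 [s; tri s]). simpl; lia.
      constructor. econstructor. constructor. apply (@ev_proj 0 [s; tri s]). simpl; lia.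
      constructor. constructor. constructor.
    + apply eval_padd.
Qed.
Lemma tri_eq s : tri s = s * (s + 1) / 2.
Proof.
  assert (H : 2 * tri s = s * (s + 1)) by (induction s; simpl tri; lia).
  rewrite <- H. rewrite Nat.mul_comm. rewrite Nat.div_mul; auto.
Qed.
Definition pcp := PComp padd [PComp ptri [PComp padd [PProj 0; PProj 1]]; PProj 1].
Lemma eval_pcp x y : eval pcp [x; y] (cpair x y).
Proof.
  unfold cpair. rewrite <- tri_eq. econstructor.
  - constructor. econstructor. constructor. econstructor.
    constructor. apply (@ev_proj 0 [x; y]). simpl; lia.
    constructor. apply (@ev_proj 1 [x; y]). simpl; lia. constructor.
    apply eval_padd. constructor. apply eval_ptri.
    constructor. apply (@ev_proj 1 [x; y]). simpl; lia. constructor.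
  - apply eval_padd.
Qed.
Definition pCP a b := PComp pcp [a; b].
Lemma eval_pCP a b v va vb : eval a v va -> eval b v vb -> eval (pCP a b) v (cpair va vb).
Proof. intros. econstructor. constructor. eauto. constructor. eauto. constructor. apply eval_pcp. Qed.

Definition capp1 f a := cpair 1 (cpair f (S (cpair a 0))).
Definition capp2 f a b := cpair 1 (cpair f (S (cpair a (S (cpair b 0))))).
Definition pA1 f pa := pCP (pconst 1) (pCP (pconst f) (pSu (pCP pa (pconst 0)))).
Definition pA2 f pa pb := pCP (pconst 1) (pCP (pconst f) (pSu (pCP pa (pSu (pCP pb (pconst 0)))))).
Lemma eval_pA1 f pa v a : eval pa v a -> eval (pA1 f pa) v (capp1 f a).
Proof. intros. unfold pA1, capp1. repeat (apply eval_pCP || apply eval_pSu || apply eval_pconst || apply ev_zero); auto. Qed.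
Lemma eval_pA2 f pa pb v a b : eval pa v a -> eval pb v b -> eval (pA2 f pa pb) v (capp2 f a b).
Proof. intros. unfold pA2, capp2. repeat (apply eval_pCP || apply eval_pSu || apply eval_pconst || apply ev_zero); auto. Qed.

Fixpoint ncode n := match n with 0 => cpair 1 (cpair 0 0) | S n => capp1 1 (ncode n) end.
Definition pnc := PPrim (pCP (pconst 1) (pCP (pconst 0) (pconst 0))) (pA1 1 (PProj 1)).
Lemma eval_pnc n : eval pnc [n] (ncode n).
Proof.
  induction n; simpl.
  - constructor. repeat (apply eval_pCP || apply eval_pconst || apply ev_zero).
  - eapply ev_primS. exact IHn. apply eval_pA1. apply (@ev_proj 1 [n; ncode n]). simpl; lia.
Qed.
Definition pNC := PComp pnc [PProj 0].
Lemma eval_pNC x : eval pNC [x] (ncode x).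
Proof. econstructor. constructor. apply (@ev_proj 0 [x]). simpl; lia. constructor. apply eval_pnc. Qed.

Definition pR i pa := pCP (pconst 2) (pCP (pconst i) (pSu (pCP pa (pconst 0)))).
Definition cR i a := cpair 2 (cpair i (S (cpair a 0))).
Lemma eval_pR i pa v a : eval pa v a -> eval (pR i pa) v (cR i a).
Proof. intros. unfold pR, cR. repeat (apply eval_pCP || apply eval_pSu || apply eval_pconst || apply ev_zero); auto. Qed.

Definition pcu := pA1 22 (pA2 12 (PProj 0) (pA2 3 pNC (pCP (pconst 1) (pCP (pconst 2) (pconst 0))))).
Definition cuv x := capp1 22 (capp2 12 x (capp2 3 (ncode x) (cpair 1 (cpair 2 0)))).
Definition Cprog := pCP (pR 0 pcu) (pR 1 pcu).
Definition Cval x := cpair (cR 0 (cuv x)) (cR 1 (cuv x)).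
Lemma eval_pcu x : eval pcu [x] (cuv x).
Proof.
  unfold pcu, cuv. apply eval_pA1. apply eval_pA2. apply (@ev_proj 0 [x]). simpl; lia.
  apply eval_pA2. apply eval_pNC. repeat (apply eval_pCP || apply eval_pconst || apply ev_zero).
Qed.
Lemma eval_Cprog x : eval Cprog [x] (Cval x).
Proof. apply eval_pCP; apply eval_pR; apply eval_pcu. Qed.

Section Codes.
Variable O : Type.
Variable enc : O -> nat.
Lemma code0 f : code enc (ofterm (tapp f [] : term O)) = cpair 1 (cpair f 0).
Proof. cbn [ofterm map code]. reflexivity. Qed.
Lemma code1 f (a : term O) : code enc (ofterm (tapp f [a])) = capp1 f (code enc (ofterm a)).
Proof. unfold capp1. cbn [ofterm map code]. reflexivity. Qed.
Lemma code2 f (a b : term O) : code enc (ofterm (tapp f [a; b])) = capp2 f (code enc (ofterm a)) (code enc (ofterm b)).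
Proof. unfold capp2. cbn [ofterm map code]. reflexivity. Qed.
Lemma coderule i (r : red O) : code enc (rrule i [r]) = cR i (code enc r).
Proof. unfold cR. cbn [code]. reflexivity. Qed.
Lemma code_num n : code enc (ofterm (num (A:=O) n)) = ncode n.
Proof. induction n. apply code0. simpl num. rewrite code1, IHn. reflexivity. Qed.
Lemma code_u (T : term O) :
  code enc (ofterm (tapp 22 [tapp 12 [T; tapp 3 [num (code enc (ofterm T)); tapp 2 []]]]))
  = cuv (code enc (ofterm T)).
Proof.
  rewrite code1, code2, code2, code0, code_num. reflexivity.
Qed.
End Codes.

Lemma hastype_ofterm {A} (t : term A) : wft S0 t -> hastype S0 (ofterm t) t t.
Proof.
  induction t using term_ind'; intros Hw.
  - constructor.
  - apply wft_app_iff in Hw as [H1 [H2 H3]]. simpl. apply ht_fun; auto.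
    + rewrite length_map; auto.
    + clear H1 H2. induction ts; simpl; constructor; inversion H; inversion H3; subst; auto.
Qed.

Lemma req_ofterm {A} (u v : term A) : teq S0 u v -> req S0 (ofterm u) (ofterm v).
Proof.
  intros H. destruct (teq_wft H) as [Wu Wv].
  assert (Hu : hastype S0 (ofterm u) u u) by (apply hastype_ofterm; auto).
  assert (Hv : hastype S0 (ofterm v) v v) by (apply hastype_ofterm; auto).
  assert (Hv' : hastype S0 (ofterm v) u v) by (eapply ht_conv; [exact Hv | apply teq_sym; exact H | apply teq_refl; auto]).
  assert (Hu' : hastype S0 (ofterm u) u v) by (eapply ht_conv; [exact Hu | apply teq_refl; auto | exact H]).
  assert (Hc : hastype S0 (rcomp (ofterm u) (ofterm v)) u v) by (eapply ht_comp; eauto).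
  eapply req_trans.
  - apply req_sym. apply (req_ax (ax_idr Hu') Hc Hu').
  - apply (req_ax (ax_idl Hv') Hc Hv').
Qed.

Lemma list_empty (l : list Empty_set) : l = [].
Proof. destruct l as [|e l]; auto. destruct e. Qed.

Lemma ndist_nil {X} k : @ndist X [] k -> k = 0.
Proof.
  intros [l' [_ [H1 H2]]]. destruct l' as [|x l']; simpl in *; auto.
  exfalso. apply (H1 x). auto.
Qed.

Lemma genpos_E (p : red Empty_set) : typed S0 p -> genpos S0 p.
Proof.
  intros Ht. split; auto. intros q k k' _ _ _ H.
  rewrite (list_empty (leaves q)) in H. apply ndist_nil in H. lia.
Qed.

Lemma ty_rule {A} i (u : term A) : i < 2 -> wft S0 u ->
  hastype S0 (rrule i [ofterm u]) (tapp 24 [u]) (tapp 24 [u]).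
Proof.
  intros Hi Hw.
  assert (E : nth_error (rules S0) i = Some (1, Gx, Gx))
    by (destruct i as [|[|]]; simpl; auto; lia).
  exact (ht_rule (rs := [ofterm u]) (ss := [u]) (ts := [u]) i E eq_refl (hts_cons (hastype_ofterm u Hw) (hts_nil _))).
Qed.

Lemma WF : WF2S S0.
Proof.
  split; [|split].
  - intros l r H. apply eqL_wft; auto.
  - intros n l r H. simpl in H. destruct H as [H|[H|[]]]; inversion H; subst;
      (split; [|split; [|split]]); try (simpl; repeat split; lia);
      intros k Hk; simpl in Hk; destruct Hk as [<-|[]]; lia.
  - intros l r H. simpl in H. destruct H as [H|[]]. inversion H; subst.
    exists (tapp 24 [tapp 23 []]), (tapp 24 [tapp 23 []]).
    split; apply (@ty_rule nat _ (tapp 23 [])); try lia; simpl; repeat split; lia.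
Qed.

Lemma w_r0 {A} rho (r : red A) : w rho (rrule 0 [r]) = false.
Proof. reflexivity. Qed.
Lemma w_r1 {A} rho (r : red A) : w rho (rrule 1 [r]) = comp (interp rho (src r)).
Proof. reflexivity. Qed.
Lemma interp_u {A} (rho : A -> D) P x :
  interp rho (tapp 22 [tapp 12 [quote P; tapp 3 [num x; tapp 2 []]]]) =
  match evS P [x] with Some _ => Some vT | None => None end.
Proof.
  change (tapp 3 [num x; tapp 2 []]) with (nlist (A:=A) [x]).
  cbn [interp map]. rewrite interp_quote, interp_nlist. simpl. destruct (evS P [x]); auto.
Qed.

Theorem theorem3p2 : exists S : FP2S, WF2S S /\ ~ LambekCoherent S.
Proof.
  exists S0. split; [exact WF|]. intros HL.
  set (enc := fun e : Empty_set => match e with end : nat).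
  destruct (HL Empty_set enc) as [prog Hprog]; [intros []|].
  set (PD := PMu (PComp prog [PComp Cprog [PProj 1]])).
  set (T := quote (A := Empty_set) PD).
  set (x0 := code enc (ofterm T)).
  set (L := tapp 3 [num x0; tapp 2 []] : term Empty_set).
  set (E := tapp 12 [T; L]).
  set (u := tapp 22 [E]).
  set (p := rrule 0 [ofterm u]).
  set (q := rrule 1 [ofterm u]).
  assert (Wu : wft S0 u) by (unfold u, E, L, T; wf).
  assert (Hp : hastype S0 p (tapp 24 [u]) (tapp 24 [u])) by (apply ty_rule; auto).
  assert (Hq : hastype S0 q (tapp 24 [u]) (tapp 24 [u])) by (apply ty_rule; auto).
  assert (Hc : cpair (code enc p) (code enc q) = Cval x0).
  { unfold p, q. rewrite !coderule. unfold u, E, L, x0. rewrite code_u. unfold Cval. reflexivity. }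
  assert (Hh : forall n, eval (PComp Cprog [PProj 1]) [n; x0] (Cval x0)).
  { intros n. econstructor. constructor. apply (@ev_proj 1 [n; x0]). simpl; lia.
    constructor. apply eval_Cprog. }
  destruct (Hprog p q (tapp 24 [u]) (tapp 24 [u])) as [H1 H0];
    try (apply genpos_E; eexists; eexists; eauto); auto.
  rewrite Hc in H1, H0.
  destruct (classic (req S0 p q)) as [Hr|Hr].
  - specialize (H1 Hr).
    destruct (req_inv Hr (fun e => match e with end)) as [Ew _].
    unfold p, q in Ew. rewrite w_r0, w_r1, src_ofterm in Ew.
    unfold u, E, L, T in Ew. rewrite interp_u in Ew.
    destruct (evS PD [x0]) eqn:Ev; simpl in Ew; try discriminate.
    apply evS_spec in Ev. unfold PD in Ev. inversion Ev; subst.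
    match goal with Hq : eval (PComp prog _) _ 0 |- _ => apply inv_comp in Hq as [ys [Hys Hpr]] end.
    apply inv_cons in Hys as [z [ys' [-> [Hz Hys']]]].
    apply inv_nil in Hys'. subst ys'.
    pose proof (eval_det Hz (Hh n)). subst z.
    pose proof (eval_det H1 Hpr). discriminate.
  - specialize (H0 Hr). apply Hr.
    assert (HPD : eval PD [x0] 0).
    { unfold PD. constructor. econstructor. constructor. apply Hh. constructor. exact H0.
      intros m Hm; lia. }
    pose proof (pos_main (A := Empty_set) HPD) as Hpos.
    assert (Htop : teq S0 u (tapp 23 [])).
    { unfold u. eapply teq_trans. apply cong1; [simpl; lia | reflexivity | exact Hpos].
      apply hlt_num. }
    assert (Ro : req S0 (ofterm u) (ofterm (tapp 23 []))) by (apply req_ofterm; auto).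
    assert (WG : wft S0 (tapp 24 [u])) by wf.
    assert (TG : teq S0 (tapp 24 [tapp 23 []]) (tapp 24 [u]))
      by (apply cong1; [simpl; lia | reflexivity | apply teq_sym; exact Htop]).
    assert (Hp' : hastype S0 (rrule 0 [ofterm (tapp 23 [])]) (tapp 24 [u]) (tapp 24 [u])).
    { eapply ht_conv; [apply ty_rule; [lia | wf] | exact TG | exact TG]. }
    assert (Hq' : hastype S0 (rrule 1 [ofterm (tapp 23 [])]) (tapp 24 [u]) (tapp 24 [u])).
    { eapply ht_conv; [apply ty_rule; [lia | wf] | exact TG | exact TG]. }
    assert (Ax : axiom S0 (rrule 0 [ofterm (tapp 23 [])]) (rrule 1 [ofterm (tapp 23 [])] : red Empty_set)).
    { pose proof (ax_user S0 (rrule 0 [rfun 23 []]) (rrule 1 [rfun 23 []]) (fun _ => tapp 0 [] : term Empty_set)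
        (or_introl eq_refl) (fun _ => wZt)) as Hx. simpl in Hx. exact Hx. }
    eapply req_trans.
    + apply (req_rule (i := 0) [] [] Ro Hp Hp').
    + eapply req_trans.
      * exact (req_ax Ax Hp' Hq').
      * apply (req_rule (i := 1) [] [] (req_sym Ro) Hq' Hq).
Qed.
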